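(* Let a power network have node set $V$, initial active link set $\mathcal{E}^0$, link weights $w\in\mathbb{R}_{\ge0}^{\mathcal{E}^0}$, link capacities $c\in\mathbb{R}_{\ge0}^{\mathcal{E}^0}$, initial balanced supply-demand vector $p^0\in\mathcal{B}_{\mathcal{E}^0}$ and horizon $N\ge1$. Then for every $\epsilon>0$ there exists a feasible control sequence $\tilde u=(\tilde u^0,\dots,\tilde u^{N-1})\in\mathcal{D}(\mathcal{E}^0,p^0,N)$ such that $$\mathbb{J}_N(\mathcal{E}^0,\{p^0\})\ \ge\ s^\top\tilde u^{N-1}\ \ge\ \mathbb{J}_N(\mathcal{E}^0,\{p^0\})-\epsilon.$$
   Context: Network model. The network is a finite undirected multigraph with node set $V$ and link set $\mathcal{E}^0$ (arbitrary reference orientation of links). For $\mathcal{E}\subseteq\mathcal{E}^0$, let $A$ be the node–link incidence matrix of $(V,\mathcal{E})$, $W=\mathrm{diag}(w_i)_{i\in\mathcal{E}}$, $L(\mathcal{E})=AWA^\top$ with pseudo-inverse $L^\dagger(\mathcal{E})$. $\mathcal{B}_{\mathcal{E}}=\{u\in\mathbb{R}^V:\sum_{v\in V^{(i)}}u_v=0$ for every connected component $V^{(i)}$ of $(V,\mathcal{E})\}$. For $p\in\mathcal{B}_{\mathcal{E}}$, $f(\mathcal{E},p)=WA^\top L^\dagger(\mathcal{E})p$. $s\in\{1,0,-1\}^V$ equals $1$ on supply nodes, $-1$ on demand nodes, $0$ on other nodes. $\mathrm{sign}(x)=1$ if $x\ge0$, $-1$ otherwise; $\mathrm{cube}(p)=\{u\in\mathbb{R}^V:0\le\mathrm{sign}(p_v)u_v\le|p_v|\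 \forall v\}$, $\mathrm{cube}(P)=\bigcup_{p\in P}\mathrm{cube}(p)$; $U(\mathcal{E},p)=\mathrm{cube}(p)\cap\mathcal{B}_{\mathcal{E}}$, $U(\mathcal{E},P)=\mathcal{B}_{\mathcal{E}}\cap\mathrm{cube}(P)$. $\mathcal{F}_{\mathcal{E}}(\mathcal{E},u)=\{i\in\mathcal{E}:|f_i(\mathcal{E},u)|\le c_i\}$. Feasible states: $\mathcal{S}=\{(\mathcal{E},p):p\in\mathcal{B}_{\mathcal{E}},|f_i(\mathcal{E},p)|\le c_i\ \forall i\in\mathcal{E}\}$. Controlled cascade: $\mathcal{E}^{t+1}=\mathcal{F}_{\mathcal{E}}(\mathcal{E}^t,u^t)$, $p^{t+1}=u^t$, $u^t\in U(\mathcal{E}^t,p^t)$. $\mathcal{D}(\mathcal{E}^0,p^0,N)$ is the set of sequences $(u^0,\dots,u^{N-1})$ with $u^t\in U(\mathcal{E}^t,p^t)$ for $t=0,\dots,N-1$ and $(\mathcal{E}^{N-1},u^{N-1})\in\mathcal{S}$, where $(\mathcal{E}^t,p^t)$ are generated by the cascade. Aggregation: for $\beta\in\{-1,0,1\}^{\mathcal{E}}$, $U(\mathcal{E},P,\beta)=\{u\in U(\mathcal{E},P): f_i(\mathcal{E},u)<-c_i$ if $\beta_i=-1$; $|f_i(\mathcal{E},u)|\le c_i$ if $\beta_i=0$; $f_i(\mathcal{E},u)>c_i$ if $\beta_i=1\}$; $\mathbb{U}(\mathcal{E},P)$ is the collection of nonempty $U(\mathcal{E},P,\beta)$. $\mathcal{F}_{\mathcal{E}}(\mathcal{E},U)=\{i\in\mathcal{E}:|f_i(\mathcal{E},u)|\le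 c_i\ \forall u\in U\}$. $\mathbb{J}_1(\mathcal{E},P)=\max\{s^\top u:u\in U(\mathcal{E},\mathrm{cl}\,P),\ |f_i(\mathcal{E},u)|\le c_i\ \forall i\in\mathcal{E}\}$ and $\mathbb{J}_{t+1}(\mathcal{E},P)=\max_{U\in\mathbb{U}(\mathcal{E},P)}\mathbb{J}_t(\mathcal{F}_{\mathcal{E}}(\mathcal{E},U),U)$ for $t\in\{1,\dots,N-1\}$. *)

(* Defs.v *)
From HB Require Import structures.
From mathcomp Require Import all_boot all_order all_algebra.
From mathcomp Require Import all_classical all_reals all_analysis.
Set Implicit Arguments. Unset Strict Implicit. Unset Printing Implicit Defensive.
Import Order.TTheory GRing.Theory Num.Theory.
Import numFieldNormedType.Exports.
Local Open Scope classical_set_scope.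
Local Open Scope ring_scope.

Definition is_MPinv (R : realType) (k : nat) (M X : 'M[R]_k) : Prop :=
  [/\ M *m X *m M = M, X *m M *m X = X, (M *m X)^T = M *m X & (X *m M)^T = X *m M].

Definition MPinv (R : realType) (k : nat) (M : 'M[R]_k) : 'M[R]_k :=
  xget 0 [set X | is_MPinv M X].

Section Network.
Variables (R : realType) (n m : nat).
(* nodes are 'I_n, links are 'I_m; link i is oriented from src i to tgt i *)
Variables (src tgt : 'I_m -> 'I_n) (w c : 'I_m -> R).

Definition incid : 'M[R]_(n, m) :=
  \matrix_(v, i) ((v == src i)%:R - (v == tgt i)%:R).

(* weight matrix restricted to the active links E (inactive links get weight 0,
   which is the same as deleting the corresponding columns of the incidence matrix) *)
Definition Wmx (E : {set 'I_m}) : 'M[R]_m :=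
  diag_mx (\row_i (if i \in E then w i else 0)).

Definition Lap (E : {set 'I_m}) : 'M[R]_n := incid *m Wmx E *m incid^T.

Definition flow (E : {set 'I_m}) (p : 'cV[R]_n) : 'cV[R]_m :=
  Wmx E *m incid^T *m MPinv (Lap E) *m p.

Definition adj (E : {set 'I_m}) : rel 'I_n :=
  fun x y => [exists i in E, ((src i == x) && (tgt i == y)) || ((src i == y) && (tgt i == x))].

Definition balanced (E : {set 'I_m}) : set 'cV[R]_n :=
  [set u | forall v : 'I_n, \sum_(x | connect (adj E) v x) u x 0 = 0].

Definition sgn (x : R) : R := if 0 <= x then 1 else -1.

Definition cube (p : 'cV[R]_n) : set 'cV[R]_n :=
  [set u | forall v, 0 <= sgn (p v 0) * u v 0 <= `|p v 0|].

Definition cubeS (P : set 'cV[R]_n) : set 'cV[R]_n := \bigcup_(p in P) cube p.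

Definition Up (E : {set 'I_m}) (p : 'cV[R]_n) : set 'cV[R]_n := cube p `&` balanced E.
Definition UP (E : {set 'I_m}) (P : set 'cV[R]_n) : set 'cV[R]_n := balanced E `&` cubeS P.

Definition Fu (E : {set 'I_m}) (u : 'cV[R]_n) : {set 'I_m} :=
  [set i in E | `|flow E u i 0| <= c i].

Definition line_ok (E : {set 'I_m}) (u : 'cV[R]_n) : Prop :=
  forall i, i \in E -> `|flow E u i 0| <= c i.

Definition feasible (E : {set 'I_m}) (p : 'cV[R]_n) : Prop :=
  balanced E p /\ line_ok E p.

Fixpoint Eseq (E0 : {set 'I_m}) (u : nat -> 'cV[R]_n) (t : nat) : {set 'I_m} :=
  match t with
  | 0 => E0
  | t'.+1 => Fu (Eseq E0 u t') (u t')
  end.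

Definition pseq (p0 : 'cV[R]_n) (u : nat -> 'cV[R]_n) (t : nat) : 'cV[R]_n :=
  match t with
  | 0 => p0
  | t'.+1 => u t'
  end.

(* u in D(E0,p0,N) (only u 0, ..., u (N-1) matter) *)
Definition inD (E0 : {set 'I_m}) (p0 : 'cV[R]_n) (N : nat) (u : nat -> 'cV[R]_n) : Prop :=
  (forall t, (t < N)%N -> Up (Eseq E0 u t) (pseq p0 u t) (u t)) /\
  feasible (Eseq E0 u N.-1) (u N.-1).

Inductive tri := Neg | Zer | Pos.

Definition Ubeta (E : {set 'I_m}) (P : set 'cV[R]_n) (beta : 'I_m -> tri) : set 'cV[R]_n :=
  [set u | UP E P u /\ forall i, i \in E ->
     match beta i with
     | Neg => flow E u i 0 < - c i
     | Zer => `|flow E u i 0| <= c i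
     | Pos => flow E u i 0 > c i
     end].

Definition UU (E : {set 'I_m}) (P : set 'cV[R]_n) : set (set 'cV[R]_n) :=
  [set U | exists beta, U = Ubeta E P beta /\ U !=set0].

Definition FU (E : {set 'I_m}) (U : set 'cV[R]_n) : {set 'I_m} :=
  [set i in E | `[< forall u, U u -> `|flow E u i 0| <= c i >]].

Definition sdot (s u : 'cV[R]_n) : R := \sum_v s v 0 * u v 0.

(* Jagg k E P = J_{k+1}(E,P); max is rendered as sup (the maxima are attained) *)
Fixpoint Jagg (s : 'cV[R]_n) (k : nat) (E : {set 'I_m}) (P : set 'cV[R]_n) : R :=
  match k with
  | 0 => sup [set sdot s u | u in [set u | UP E (closure P) u /\ line_ok E u]]
  | k'.+1 => sup [set Jagg s k' (FU E U) U | U in UU E P]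
  end.

Definition JN (s : 'cV[R]_n) (N : nat) (E : {set 'I_m}) (P : set 'cV[R]_n) : R :=
  Jagg s N.-1 E P.

End Network.

(* Main.v *)
Require Import Defs.
From HB Require Import structures.
From mathcomp Require Import all_boot all_order all_algebra.
From mathcomp Require Import all_classical all_reals all_analysis.
From mathcomp Require Import lra.
Import Order.TTheory GRing.Theory Num.Theory.
Import numFieldNormedType.Exports.
Local Open Scope classical_set_scope.
Local Open Scope ring_scope.
Set Implicit Arguments. Unset Strict Implicit.

Lemma cube_abs (R : realType) n (p u : 'cV[R]_n) :
  cube p u -> forall v, `|u v 0| <= `|p v 0|.
Proof.
move=> h v; case/andP: (h v) => h1 h2.
have e : `|sgn (p v 0) * u v 0| = `|u v 0|.
  by rewrite normrM /sgn; case: ifP => _; rewrite ?normrN normr1 mul1r.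
by rewrite -e ger0_norm.
Qed.

Lemma cube0 (R : realType) n (p : 'cV[R]_n) : cube p 0.
Proof. by move=> v; rewrite mxE mulr0 lexx normr_ge0. Qed.

Lemma cube_perturb (R : realType) n (q q' u : 'cV[R]_n) (l d : R) :
  0 <= l -> l < 1 -> cube q u ->
  (forall v, 0 < `|q v 0| -> d <= (1 - l) * `|q v 0|) ->
  (forall v, `|q v 0 - q' v 0| < d) -> cube q' (l *: u).
Proof.
move=> l0 l1 cu hd hq v; rewrite mxE.
have := cu v; have := hd v; have := hq v; rewrite /sgn.
set a := q v 0; set b := q' v 0; set x := u v 0.
have [x0|x0] := eqVneq x 0.
  by move=> *; rewrite x0 !mulr0 lexx normr_ge0.
case: (lerP 0 a) => a0.
  rewrite mul1r (ger0_norm a0) => hab hd' /andP[h1 h2].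
  have xp : 0 < x by rewrite lt_neqAle eq_sym x0 h1.
  have ap : 0 < a by lra.
  have hd2 := hd' ap.
  move: hab; rewrite ltr_norml => /andP[hb1 hb2].
  have b0 : 0 <= b by nra.
  rewrite b0 mul1r ger0_norm //; apply/andP; split; nra.
rewrite mulN1r (ltr0_norm a0) => hab hd' /andP[h1 h2].
have xp : x < 0.
  by rewrite lt_neqAle x0 /=; rewrite -oppr_ge0.
have ap : 0 < - a by lra.
have hd2 := hd' ap.
move: hab; rewrite ltr_norml => /andP[hb1 hb2].
have b0 : b < 0 by nra.
have -> : (0 <= b) = false by rewrite leNgt b0.
rewrite mulN1r ltr0_norm //; apply/andP; split; nra.
Qed.
Definition Box (R : realType) n (p0 : 'cV[R]_n) : set 'cV[R]_n :=
  [set u | forall v, `|u v 0| <= `|p0 v 0|].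
Definition Mb (R : realType) n (p0 : 'cV[R]_n) : R := \sum_v `|p0 v 0|.
Arguments Box {R n}.
Arguments Mb {R n}.

Lemma flowZ (R : realType) n m src tgt w E (a : R) (u : 'cV[R]_n) :
  @flow R n m src tgt w E (a *: u) = a *: flow src tgt w E u.
Proof. by rewrite /flow scalemxAr. Qed.

Lemma line_okZ (R : realType) n m src tgt w c E (a : R) (u : 'cV[R]_n) :
  0 <= a <= 1 -> @line_ok R n m src tgt w c E u -> line_ok src tgt w c E (a *: u).
Proof.
move=> /andP[a0 a1] h i iE; rewrite flowZ mxE normrM (ger0_norm a0).
have := h i iE; have := normr_ge0 (flow src tgt w E u i 0); nra.
Qed.

Lemma line_ok0 (R : realType) n m src tgt w c E :
  (forall i, 0 <= c i) -> @line_ok R n m src tgt w c E 0.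
Proof. by move=> hc i _; rewrite /flow mulmx0 mxE normr0. Qed.

Lemma balancedZ (R : realType) n m src tgt E (a : R) (u : 'cV[R]_n) :
  @balanced R n m src tgt E u -> balanced src tgt E (a *: u).
Proof.
move=> h v; under eq_bigr => x _ do rewrite mxE.
by rewrite -mulr_sumr h mulr0.
Qed.

Lemma balanced0 (R : realType) n m src tgt E : @balanced R n m src tgt E 0.
Proof. by move=> v; rewrite big1 // => x _; rewrite mxE. Qed.

Lemma sdotZ (R : realType) n (s u : 'cV[R]_n) a : sdot s (a *: u) = a * sdot s u.
Proof. by rewrite /sdot mulr_sumr; apply: eq_bigr => v _; rewrite mxE mulrCA. Qed.

Lemma sdot_le (R : realType) n (s p0 u : 'cV[R]_n) :
  (forall v, s v 0 \in [:: 1; 0; -1]) -> Box p0 u -> sdot s u <= Mb p0.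
Proof.
move=> hs hu; apply: ler_sum => v _.
have h := hu v.
move: (hs v); rewrite !inE => /or3P [/eqP->|/eqP->|/eqP->].
- by rewrite mul1r (le_trans (ler_norm _)).
- by rewrite mul0r normr_ge0.
- by rewrite mulN1r (le_trans _ h) // -normrN ler_norm.
Qed.

Lemma Mb_ge0 (R : realType) n (p0 : 'cV[R]_n) : 0 <= Mb p0.
Proof. by apply: sumr_ge0 => v _; exact: normr_ge0. Qed.

Lemma closure_approx (R : realType) n (P : set 'cV[R]_n) (q : 'cV[R]_n) :
  closure P q -> forall d : R, 0 < d -> exists2 q', P q' & forall v, `|q v 0 - q' v 0| < d.
Proof.
move=> cl d d0.
have := cl (ball q d) (nbhsx_ballx _ _ d0).
case=> q' [Pq' bq]; exists q' => // v.
by move: bq; case=> _ /(_ v 0).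
Qed.

Arguments closure_approx {R n P q}.

Lemma closure_Box (R : realType) n (p0 : 'cV[R]_n) (P : set 'cV[R]_n) :
  P `<=` Box p0 -> closure P `<=` Box p0.
Proof.
move=> hP q cq v; apply/ler_addgt0Pr => e e0.
have [q' Pq' hq] := closure_approx cq _ e0.
have := hP _ Pq' v; have := hq v.

move=> h2 h3.
have : `|q v 0| <= `|q' v 0| + `|q v 0 - q' v 0|.
  by rewrite -[X in `|X|](subrK (q' v 0)) addrC (le_trans (ler_normD _ _)).
lra.
Qed.

Lemma mu_exists (R : realType) n (q : 'cV[R]_n) :
  exists2 mu : R, 0 < mu & forall v, 0 < `|q v 0| -> mu <= `|q v 0|.
Proof.
exists (\big[Num.min/1]_v (if 0 < `|q v 0| then `|q v 0| else 1)).
  elim/big_ind: _ => //; first by move=> x y; rewrite lt_min => -> ->.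
  by move=> v _; case: ifP.
move=> v hv; have := @bigmin_le _ R _ (1:R) v (fun v => if 0 < `|q v 0| then `|q v 0| else 1). by rewrite /= hv.
Qed.
Definition betaf (R : realType) n m src tgt w c E (u : 'cV[R]_n) : 'I_m -> tri :=
  fun i => let f := @flow R n m src tgt w E u i 0 in
    if `|f| <= c i then Zer else if f < - c i then Neg else Pos.

Lemma betafP (R : realType) n m src tgt w c E P (u : 'cV[R]_n) :
  UP src tgt E P u -> @Ubeta R n m src tgt w c E P (betaf src tgt w c E u) u.
Proof.
move=> hu; split => // i iE; rewrite /betaf.
set f := flow src tgt w E u i 0.
case: ifP => // h1; case: ifP => // h2.
move/negbT: h1; move/negbT: h2; rewrite -!ltNge ltr_normr => h2 /orP[//|h3].
lra.
Qed.

Lemma FU_Ubeta (R : realType) n m src tgt w c E P beta (u : 'cV[R]_n) :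
  @Ubeta R n m src tgt w c E P beta u ->
  FU src tgt w c E (Ubeta src tgt w c E P beta) = Fu src tgt w c E u.
Proof.
move=> hu; apply/setP => i; rewrite !inE; case iE: (i \in E) => //=.
apply/idP/idP => [/asboolP h|h]; first exact: h.
apply/asboolP => u' [_ hu'].
move: (hu.2 i iE) (hu' i iE) h; case: (beta i) => // h1 h2 h3.
- by move: h3; rewrite ler_norml; lra.
- by move: h3; rewrite ler_norml; lra.
Qed.

Definition shift (R : realType) n (u : nat -> 'cV[R]_n) : nat -> 'cV[R]_n := fun t => u t.+1.

Fixpoint chain (R : realType) n m src tgt w c (k : nat) (E : {set 'I_m}) (u : nat -> 'cV[R]_n) : Prop :=
  match k with
  | 0 => @line_ok R n m src tgt w c E (u 0%N)
  | k'.+1 => UP src tgt (Fu src tgt w c E (u 0%N)) [set u 0%N] (u 1%N) /\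
             chain src tgt w c k' (Fu src tgt w c E (u 0%N)) (shift u)
  end.

Definition seqOK (R : realType) n m src tgt w c k E P (u : nat -> 'cV[R]_n) : Prop :=
  @UP R n m src tgt E P (u 0%N) /\ chain src tgt w c k E u.

Lemma Eseq_shift (R : realType) n m src tgt w c E (u : nat -> 'cV[R]_n) t :
  @Eseq R n m src tgt w c E u t.+1 = Eseq src tgt w c (Fu src tgt w c E (u 0%N)) (shift u) t.
Proof.
elim: t => [|t IH] //.
transitivity (Fu src tgt w c (Eseq src tgt w c E u t.+1) (u t.+1)); first by [].
by rewrite IH.
Qed.

Lemma seqOK_inD (R : realType) n m src tgt w c k E (p : 'cV[R]_n) u :
  @seqOK R n m src tgt w c k E [set p] u ->
  (forall t, (t <= k)%N -> Up src tgt (Eseq src tgt w c E u t) (pseq p u t) (u t)) /\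
  feasible src tgt w c (Eseq src tgt w c E u k) (u k).
Proof.
elim: k E p u => [|k IH] E p u [[hb [q /= -> hq]] hc].
  split; last by split.
  by move=> t; rewrite leqn0 => /eqP ->; split.
have [h1 h2] := IH _ _ (shift u) hc.
have e := Eseq_shift src tgt w c E u k; rewrite /= in e.
split; last by rewrite e; exact: h2.
case=> [_|t ht]; first by split.
rewrite Eseq_shift; have := h1 t ht.
by case: t {ht}.
Qed.
Lemma UP_Box (R : realType) n m src tgt E P (p0 u : 'cV[R]_n) :
  P `<=` Box p0 -> @UP R n m src tgt E P u -> Box p0 u.
Proof. by move=> hP [_ [q Pq cq]] v; exact: le_trans (cube_abs cq v) (hP q Pq v). Qed.

Lemma UP_nonempty (R : realType) n m src tgt E (P : set 'cV[R]_n) :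
  P !=set0 -> @UP R n m src tgt E P 0.
Proof. by move=> [p Pp]; split; [exact: balanced0 | exists p => //; exact: cube0]. Qed.

Lemma UP_mono (R : realType) n m src tgt E (P Q : set 'cV[R]_n) :
  P `<=` Q -> @UP R n m src tgt E P `<=` UP src tgt E Q.
Proof. by move=> hPQ u [hb [q Pq cq]]; split => //; exists q => //; exact: hPQ. Qed.

Lemma UU_facts (R : realType) n m src tgt w c E P (p0 : 'cV[R]_n) U :
  P `<=` Box p0 -> @UU R n m src tgt w c E P U -> U `<=` Box p0 /\ U !=set0.
Proof.
move=> hP [beta [-> hne]]; split => // u [hu _].
exact: UP_Box hP hu.
Qed.

Lemma main (R : realType) n m src tgt w c (hc : forall i, 0 <= c i)
  (s p0 : 'cV[R]_n) (hs : forall v, s v 0 \in [:: 1; 0; -1]) k :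
  forall E P, P `<=` Box p0 -> P !=set0 ->
  [/\ @Jagg R n m src tgt w c s k E P <= Mb p0,
   forall u, seqOK src tgt w c k E P u -> sdot s (u k) <= Jagg src tgt w c s k E P &
   forall eps, 0 < eps -> exists u, seqOK src tgt w c k E P u /\
      Jagg src tgt w c s k E P - eps <= sdot s (u k)].
Proof.
have M0 := Mb_ge0 p0.
elim: k => [|k IH] E P hP Pne.
  set A := [set sdot s u | u in [set u | UP src tgt E (closure P) u /\ line_ok src tgt w c E u]].
  have -> : Jagg src tgt w c s 0 E P = sup A by [].
  have hPc : closure P `<=` Box p0 := closure_Box hP.
  have A0 : A !=set0.
    exists (sdot s 0); exists 0 => //; split; last exact: line_ok0.
    apply: UP_nonempty; case: Pne => p Pp; exists p; exact: subset_closure.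
  have Aub : ubound A (Mb p0) by move=> _ [u [hu _] <-]; exact: sdot_le hs (UP_Box hPc hu).
  split.
  - exact: ge_sup A0 Aub.
  - move=> u [hu hl]; apply: ub_le_sup; first by exists (Mb p0).
    exists (u 0%N) => //; split => //; exact: UP_mono (@subset_closure _ P) _ hu.
  - move=> eps e0.
    have e2 : 0 < eps / 2 by rewrite divr_gt0.
    have [_ [x [hx hlx] <-] hy] := sup_adherent e2 (conj A0 (ex_intro _ _ Aub)).
    have xM : sdot s x <= Mb p0 by apply: Aub; exists x.
    case: hx => hbx [q cq hqx].
    set M := Mb p0 in M0 xM *.
    have D0 : 0 < 2 * (M + 1) + eps by lra.
    set t := eps / (2 * (M + 1) + eps).
    have te : t * (2 * (M + 1) + eps) = eps by rewrite /t divfK // gt_eqF.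
    have t0 : 0 < t by rewrite /t divr_gt0.
    have t1 : t < 1 by nra.
    have [mu mu0 hmu] := mu_exists q.
    have [q' Pq' hq'] := closure_approx cq (t * mu) (mulr_gt0 t0 mu0).
    have cu : cube q' ((1 - t) *: x).
      apply: (@cube_perturb _ _ q q' x (1 - t) (t * mu)) => //; try lra.
      move=> v hv; rewrite (_ : 1 - (1 - t) = t); last by lra.
      by apply: ler_wpM2l; [exact: ltW | exact: hmu].
    exists (fun _ => (1 - t) *: x); split.
      split; last by apply: line_okZ => //; apply/andP; split; lra.
      by split; [exact: balancedZ | exists q'].
    rewrite sdotZ; nra.
set B := [set Jagg src tgt w c s k (FU src tgt w c E U) U | U in UU src tgt w c E P].
have -> : Jagg src tgt w c s k.+1 E P = sup B by [].
have B0 : B !=set0.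
  set U0 := Ubeta src tgt w c E P (betaf src tgt w c E 0).
  exists (Jagg src tgt w c s k (FU src tgt w c E U0) U0); exists U0 => //.
  exists (betaf src tgt w c E 0); split => //; exists 0; apply: betafP.
  exact: UP_nonempty.
have Bub : ubound B (Mb p0).
  move=> _ [U hU <-]; have [hUb hUn] := UU_facts hP hU.
  by have [b _ _] := IH (FU src tgt w c E U) U hUb hUn.
have hB : has_ubound B by exists (Mb p0).
split.
- exact: ge_sup B0 Bub.
- move=> u [hu0 [[hb1 hc1] hch]].
  set U := Ubeta src tgt w c E P (betaf src tgt w c E (u 0%N)).
  have hU0 : U (u 0%N) by apply: betafP.
  have eF := FU_Ubeta hU0.
  have hUU : UU src tgt w c E P U by exists (betaf src tgt w c E (u 0%N)); split => //; exists (u 0%N).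
  have [hUb hUn] := UU_facts hP hUU.
  have [_ ha _] := IH (FU src tgt w c E U) U hUb hUn.
  have h : sdot s (shift u k) <= Jagg src tgt w c s k (FU src tgt w c E U) U.
    apply: ha; split.
      split; first by rewrite eF.
      by case: hc1 => q -> hq; exists (u 0%N).
    by rewrite eF.
  apply: (le_trans h); apply: (ub_le_sup hB); by exists U.
- move=> eps e0.
  have e2 : 0 < eps / 2 by rewrite divr_gt0.
  have [_ [U hU <-] hy] := sup_adherent e2 (conj B0 hB).
  have [hUb hUn] := UU_facts hP hU.
  have [_ _ hb] := IH (FU src tgt w c E U) U hUb hUn.
  have [u' [hsq hv]] := hb _ e2. case: hsq => [[hb' hcq] hch']. case: hcq => q hqU hq'.
  case: hU => beta [eU _]; rewrite eU in hqU.
  have eF := FU_Ubeta hqU; rewrite -eU in eF.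
  exists (fun t => if t is t'.+1 then u' t' else q); split.
    split; first by case: hqU.
    split; rewrite -eF //.
    by split => //; exists q.
  rewrite /=; lra.
Qed.

Unset Implicit Arguments.

Theorem proposition4 (R : realType) (n m : nat) (src tgt : 'I_m -> 'I_n)
  (w c : 'I_m -> R) (hw : forall i, 0 <= w i) (hc : forall i, 0 <= c i)
  (s : 'cV[R]_n) (hs : forall v, s v 0 \in [:: 1; 0; -1])
  (p0 : 'cV[R]_n) (hp0 : balanced src tgt [set: 'I_m] p0)
  (N : nat) (hN : (1 <= N)%N) :
  forall eps : R, 0 < eps ->
  exists u : nat -> 'cV[R]_n,
    inD src tgt w c [set: 'I_m] p0 N u /\
    JN src tgt w c s N [set: 'I_m] [set p0] >= sdot s (u N.-1) /\
    sdot s (u N.-1) >= JN src tgt w c s N [set: 'I_m] [set p0] - eps.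
Proof.
move=> eps e0.
have hP : [set p0] `<=` Box p0 by move=> _ ->.
have hne : [set p0] !=set0 by exists p0.
have [_ ha hb] := @main R n m src tgt w c hc s p0 hs N.-1 [set: 'I_m] [set p0] hP hne.
have [u [hu hv]] := hb eps e0.
exists u.
have [h1 h2] := seqOK_inD hu.
split; [split | split].
- by move=> t ht; apply: h1; rewrite -ltnS prednK.
- exact: h2.
- exact: ha hu.
- exact: hv.
Qed.
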